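(* Each of GVC, GVC1 and GVC2 is equivalent to the unconstrained binary quadratic programming problem UBQP: every instance of one can be formulated as an instance of the other such that an optimal solution of the new instance yields an optimal solution of the original instance (identifying $U\subseteq\{1,\dots,n\}$ with its incidence vector $x\in\{0,1\}^n$).
   Context: Let $G=(V,E)$ be a graph with $V=\{1,\dots,n\}$, vertex weights $c_i\in\mathbb{R}$ and edge weights $q^0_{ij},q^1_{ij},q^2_{ij}\in\mathbb{R}$. For $U\subseteq V$ let $E_0(U)$, $E_1(U)$, $E_2(U)$ be the sets of edges with zero, exactly one, and two endpoints in $U$, respectively, and $f(U)=\sum_{i\in U}c_i+\sum_{E_0(U)}q^0_{ij}+\sum_{E_1(U)}q^1_{ij}+\sum_{E_2(U)}q^2_{ij}$. GVC asks for $U\subseteq V$ minimizing $f(U)$; GVC1 is the special case $q^1\equiv q^2\equiv0$, GVC2 the special case $q^0\equiv q^1\equiv 0$. UBQP: given a symmetric real $n\times n$ matrix $Q=(q_{ij})$ with zero diagonal and a vector $a\in\mathbb{R}^n$, find $x\in\{0,1\}^n$ minimizing $\sum_i a_ix_i+\sum_{i=1}^n\sum_{j=1}^n q_{ij}x_ix_j$. Two problems are equivalent if each can be formulated as the other so that an optimal solution of the formulated instance gives an optimal solution of the original. *)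

(* Defs.v *)
From HB Require Import structures.
From mathcomp Require Import all_boot all_order all_algebra.
Set Implicit Arguments. Unset Strict Implicit. Unset Printing Implicit Defensive.
Import Order.TTheory GRing.Theory Num.Theory.
Local Open Scope ring_scope.

Section GVC.
Variables (R : realFieldType) (n : nat).

(* A simple graph on V = {1,...,n} (represented by 'I_n): a symmetric,
   irreflexive adjacency relation.  The edge {i,j} is the pair (i,j), i < j. *)
Definition simple_graph (e : rel 'I_n) : Prop := irreflexive e /\ symmetric e.

Definition gvc_obj (e : rel 'I_n) (c : 'I_n -> R) (q0 q1 q2 : 'I_n -> 'I_n -> R)
    (U : {set 'I_n}) : R :=
  \sum_(i in U) c i
  + \sum_(p : 'I_n * 'I_n | ((p.1 < p.2)%N && e p.1 p.2))
      (if (p.1 \in U) && (p.2 \in U) then q2 p.1 p.2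
       else if (p.1 \notin U) && (p.2 \notin U) then q0 p.1 p.2
       else q1 p.1 p.2).

Definition gvc_opt e c q0 q1 q2 (U : {set 'I_n}) : Prop :=
  forall U' : {set 'I_n}, gvc_obj e c q0 q1 q2 U <= gvc_obj e c q0 q1 q2 U'.

Definition ubqp_inst (Q : 'M[R]_n) : Prop := Q^T = Q /\ forall i, Q i i = 0.

Definition ubqp_obj (Q : 'M[R]_n) (a : 'rV[R]_n) (x : 'I_n -> bool) : R :=
  \sum_i a 0 i * (x i)%:R + \sum_i \sum_j Q i j * (x i)%:R * (x j)%:R.

Definition ubqp_opt Q a (x : 'I_n -> bool) : Prop :=
  forall x' : 'I_n -> bool, ubqp_obj Q a x <= ubqp_obj Q a x'.

End GVC.

Inductive gvc_kind := GVC | GVC1 | GVC2.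

Definition in_kind (R : realFieldType) (n : nat) (k : gvc_kind)
    (q0 q1 q2 : 'I_n -> 'I_n -> R) : Prop :=
  match k with
  | GVC => True
  | GVC1 => q1 = (fun _ _ => 0) /\ q2 = (fun _ _ => 0)
  | GVC2 => q0 = (fun _ _ => 0) /\ q1 = (fun _ _ => 0)
  end.

Definition gvc_to_ubqp (R : realFieldType) (n : nat) (k : gvc_kind) : Prop :=
  forall (e : rel 'I_n) (c : 'I_n -> R) (q0 q1 q2 : 'I_n -> 'I_n -> R),
    simple_graph e -> in_kind k q0 q1 q2 ->
    exists (Q : 'M[R]_n) (a : 'rV[R]_n) (K : R),
      ubqp_inst Q /\
      (forall U : {set 'I_n}, gvc_obj e c q0 q1 q2 U = ubqp_obj Q a (fun i => i \in U) + K) /\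
      (forall U : {set 'I_n}, ubqp_opt Q a (fun i => i \in U) -> gvc_opt e c q0 q1 q2 U).

Definition ubqp_to_gvc (R : realFieldType) (n : nat) (k : gvc_kind) : Prop :=
  forall (Q : 'M[R]_n) (a : 'rV[R]_n),
    ubqp_inst Q ->
    exists (e : rel 'I_n) (c : 'I_n -> R) (q0 q1 q2 : 'I_n -> 'I_n -> R) (K : R),
      simple_graph e /\ in_kind k q0 q1 q2 /\
      (forall x : 'I_n -> bool, ubqp_obj Q a x = gvc_obj e c q0 q1 q2 [set i | x i] + K) /\
      (forall x : 'I_n -> bool, gvc_opt e c q0 q1 q2 [set i | x i] -> ubqp_opt Q a x).

(* Main.v *)
Require Import Defs.
From mathcomp Require Import all_boot all_order all_algebra ring.
Set Implicit Arguments. Unset Strict Implicit. Unset Printing Implicit Defensive.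
Import Order.TTheory GRing.Theory Num.Theory.
Local Open Scope ring_scope.

Lemma pairsum (R : realFieldType) n (P : 'I_n -> 'I_n -> bool) (F : 'I_n -> 'I_n -> R) :
  \sum_(p : 'I_n * 'I_n | P p.1 p.2) F p.1 p.2 = \sum_i \sum_j (if P i j then F i j else 0).
Proof.
rewrite big_mkcond (pair_big xpredT xpredT (fun i j => if P i j then F i j else 0)) /=.
by [].
Qed.

Lemma sum_in (R : realFieldType) n (U : {set 'I_n}) (c : 'I_n -> R) :
  \sum_(i in U) c i = \sum_i c i * (i \in U)%:R.
Proof.
rewrite big_mkcond; apply eq_bigr => i _; case: (i \in U); by rewrite ?mulr1 ?mulr0.
Qed.

Lemma S2tri (R : realFieldType) n (F : 'I_n -> 'I_n -> R) : (forall i, F i i = 0) ->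
  \sum_(i < n) \sum_(j < n) F i j = \sum_(i < n) \sum_(j < n) (if (i < j)%N then F i j + F j i else 0).
Proof.
move=> HF.
transitivity (\sum_(i < n) \sum_(j < n) ((if (i < j)%N then F i j else 0) + (if (j < i)%N then F i j else 0))).
  apply eq_bigr => i _; apply eq_bigr => j _.
  case: ltngtP => h; rewrite ?addr0 ?add0r //.
  by rewrite (ord_inj h) HF.
under eq_bigr do rewrite big_split.
rewrite big_split /= [X in _ + X]exchange_big /= -big_split.
apply eq_bigr => i _; rewrite -big_split; apply eq_bigr => j _ /=.
by case: ifP; rewrite ?addr0.
Qed.

Lemma dir1 (R : realFieldType) n k : gvc_to_ubqp R n k.
Proof.
move=> e c q0 q1 q2 _ _.
pose P := fun i j : 'I_n => (i < j)%N && e i j.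
pose d := fun i j => q2 i j + q0 i j - q1 i j *+ 2.
pose l := fun i j => q1 i j - q0 i j.
pose D := fun i j => if P i j then d i j else 0.
pose L := fun i j => if P i j then l i j else 0.
pose M := \matrix_(i, j) ((D i j + D j i) / 2) : 'M[R]_n.
pose a := \row_i (c i + \sum_(j < n) (L i j + L j i)) : 'rV[R]_n.
pose K := \sum_(i < n) \sum_(j < n) (if P i j then q0 i j else 0).
pose W := fun (x : 'I_n -> bool) i j => if P i j then
   (if x i && x j then q2 i j else if ~~ x i && ~~ x j then q0 i j else q1 i j) else 0.
exists M, a, K.
have Hu : forall x : 'I_n -> bool, ubqp_obj M a x + K =
   \sum_(i < n) c i * (x i)%:R + \sum_(i < n) \sum_(j < n) W x i j.
  move=> x; rewrite /ubqp_obj.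
  have E1 : \sum_(i < n) a 0 i * (x i)%:R = \sum_(i < n) c i * (x i)%:R +
      \sum_(i < n) \sum_(j < n) (L i j * (x i)%:R) + \sum_(i < n) \sum_(j < n) (L i j * (x j)%:R).
    rewrite [X in _ = _ + X]exchange_big /= -addrA -big_split -big_split /=.
    apply eq_bigr => i _; rewrite mxE -big_split /= mulrDl big_distrl /=.
    congr (_ + _); apply eq_bigr => j _; by rewrite mulrDl.
  have E2 : \sum_(i < n) \sum_(j < n) M i j * (x i)%:R * (x j)%:R =
            \sum_(i < n) \sum_(j < n) (D i j * (x i)%:R * (x j)%:R).
    transitivity (\sum_(i < n) \sum_(j < n) (D i j / 2 * (x i)%:R * (x j)%:R) +
                  \sum_(i < n) \sum_(j < n) (D j i / 2 * (x i)%:R * (x j)%:R)).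
      rewrite -big_split; apply eq_bigr=> i _; rewrite -big_split; apply eq_bigr => j _.
      rewrite mxE /=; ring.
    rewrite [X in _ + X = _]exchange_big -big_split; apply eq_bigr => i _.
    rewrite -big_split; apply eq_bigr => j _ /=.
    by field.
  change (\sum_(i < n) a 0 i * (x i)%:R + \sum_(i < n) \sum_(j < n) M i j * (x i)%:R * (x j)%:R + K = \sum_(i < n) c i * (x i)%:R + \sum_(i < n) \sum_(j < n) W x i j).
  rewrite E1 E2 /K -!addrA; congr (_ + _).
  rewrite -!big_split; apply eq_bigr => i _; rewrite -!big_split; apply eq_bigr => j _ /=.
  rewrite /W /L /D /d /l; case: (P i j); case: (x i); case: (x j) => /=; ring.
have Heq : forall U : {set 'I_n}, gvc_obj e c q0 q1 q2 U =
   ubqp_obj M a (fun i => i \in U) + K.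
  move=> U; rewrite Hu.
  rewrite /gvc_obj (pairsum P (fun i j => if (i \in U) && (j \in U) then q2 i j
       else if (i \notin U) && (j \notin U) then q0 i j else q1 i j)) sum_in.
  by [].
split; [|split] => //.
  split.
    by apply/matrixP => i j; rewrite !mxE addrC.
  by move=> i; rewrite mxE /D /P ltnn /= addr0 mul0r.
move=> U HU U'; rewrite !Heq lerD2r; exact: HU.
Qed.

Lemma opt2 (R : realFieldType) n (Q : 'M[R]_n) a e c q0 q1 q2 K :
  (forall x, ubqp_obj Q a x = gvc_obj e c q0 q1 q2 [set i | x i] + K) ->
  forall x, gvc_opt e c q0 q1 q2 [set i | x i] -> ubqp_opt Q a x.
Proof. by move=> H x Hg x'; rewrite !H lerD2r; exact: Hg. Qed.

Lemma gvc_form (R : realFieldType) n c (q0 q1 q2 : 'I_n -> 'I_n -> R) (x : 'I_n -> bool) :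
  gvc_obj (fun i j : 'I_n => i != j) c q0 q1 q2 [set i | x i] =
  \sum_(i < n) c i * (x i)%:R + \sum_(i < n) \sum_(j < n) (if (i < j)%N then
     (if x i && x j then q2 i j else if ~~ x i && ~~ x j then q0 i j else q1 i j) else 0).
Proof.
rewrite /gvc_obj (pairsum (fun i j : 'I_n => (i < j)%N && (i != j))
   (fun i j => if (i \in [set i | x i]) && (j \in [set i | x i]) then q2 i j
       else if (i \notin [set i | x i]) && (j \notin [set i | x i]) then q0 i j else q1 i j)) sum_in.
congr (_ + _).
  by apply eq_bigr => i _; rewrite inE.
apply eq_bigr => i _; apply eq_bigr => j _; rewrite !inE.
case: ltngtP => //= h.
have -> : (i != j) by rewrite neq_ltn h.
by [].
Qed.

Lemma ubqp_form (R : realFieldType) n (Q : 'M[R]_n) a (x : 'I_n -> bool) :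
  ubqp_inst Q ->
  ubqp_obj Q a x = \sum_(i < n) a 0 i * (x i)%:R + \sum_(i < n) \sum_(j < n)
     (if (i < j)%N then (Q i j *+ 2) * (x i)%:R * (x j)%:R else 0).
Proof.
move=> [HT Hd].
have HS : forall i j, Q j i = Q i j by move=> i j; rewrite -{2}HT mxE.
rewrite /ubqp_obj.
change (\sum_(i < n) a 0 i * (x i)%:R + \sum_(i < n) \sum_(j < n) Q i j * (x i)%:R * (x j)%:R = \sum_(i < n) a 0 i * (x i)%:R + \sum_(i < n) \sum_(j < n)
     (if (i < j)%N then (Q i j *+ 2) * (x i)%:R * (x j)%:R else 0)).
rewrite (@S2tri _ _ (fun i j => Q i j * (x i)%:R * (x j)%:R)); last by move=> i; rewrite Hd !mul0r.
congr (_ + _); apply eq_bigr => i _; apply eq_bigr => j _.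
case: ifP => // _; rewrite HS; ring.
Qed.

Lemma dir2 (R : realFieldType) n k : ubqp_to_gvc R n k.
Proof.
move=> Q a HQ; have [HT Hd] := HQ.
have HS : forall i j, Q j i = Q i j by move=> i j; rewrite -{2}HT mxE.
have Hse : simple_graph (fun i j : 'I_n => i != j).
  by split; [move=> i; rewrite /= eqxx | move=> i j; rewrite eq_sym].
have H0 : forall x, ubqp_obj Q a x = gvc_obj (fun i j : 'I_n => i != j) (fun i => a 0 i)
    (fun _ _ => 0) (fun _ _ => 0) (fun i j => Q i j *+ 2) [set i | x i] + 0.
  move=> x; rewrite ubqp_form // gvc_form addr0; congr (_ + _).
  apply eq_bigr => i _; apply eq_bigr => j _; case: ifP => // _.
  by case: (x i); case: (x j) => /=; ring.
case: k.
- exists (fun i j : 'I_n => i != j), (fun i => a 0 i), (fun _ _ => 0), (fun _ _ => 0),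
    (fun i j => Q i j *+ 2), 0.
  by split => //; split => //; split => //; exact: opt2 H0.
- pose K := \sum_(i < n) \sum_(j < n) (if (i < j)%N then - (Q i j *+ 2) else 0).
  exists (fun i j : 'I_n => i != j), (fun i => a 0 i + \sum_(j < n) Q i j *+ 2),
    (fun i j => Q i j *+ 2), (fun _ _ => 0), (fun _ _ => 0), K.
  have H : forall x, ubqp_obj Q a x = gvc_obj (fun i j : 'I_n => i != j)
      (fun i => a 0 i + \sum_(j < n) Q i j *+ 2)
      (fun i j => Q i j *+ 2) (fun _ _ => 0) (fun _ _ => 0) [set i | x i] + K.
    move=> x; rewrite ubqp_form // gvc_form.
    have E : \sum_(i < n) (a 0 i + \sum_(j < n) Q i j *+ 2) * (x i)%:R =
       \sum_(i < n) a 0 i * (x i)%:R + \sum_(i < n) \sum_(j < n)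
         (if (i < j)%N then Q i j *+ 2 * (x i)%:R + Q j i *+ 2 * (x j)%:R else 0).
      transitivity (\sum_(i < n) a 0 i * (x i)%:R +
                    \sum_(i < n) \sum_(j < n) (Q i j *+ 2 * (x i)%:R)).
        by rewrite -big_split; apply eq_bigr => i _; rewrite mulrDl big_distrl.
      congr (_ + _); apply (@S2tri _ _ (fun i j => Q i j *+ 2 * (x i)%:R)) => i.
      by rewrite Hd mul0rn mul0r.
    rewrite E /K -!addrA; congr (_ + _).
    rewrite -!big_split; apply eq_bigr => i _; rewrite -!big_split; apply eq_bigr => j _ /=.
    case: ifP => _; last by rewrite !addr0.
    rewrite (HS i j).
    by case: (x i); case: (x j) => /=; ring.
  by split => //; split => //; split => //; exact: opt2 H.
- exists (fun i j : 'I_n => i != j), (fun i => a 0 i), (fun _ _ => 0), (fun _ _ => 0),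
    (fun i j => Q i j *+ 2), 0.
  by split => //; split => //; split => //; exact: opt2 H0.
Qed.

Theorem theorem2 (R : realFieldType) (n : nat) (k : gvc_kind) :
  gvc_to_ubqp R n k /\ ubqp_to_gvc R n k.
Proof. split; [exact: dir1 | exact: dir2]. Qed.
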